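(* Let $\mathbb{X}$ be a reflexive Kadets-Klee real Banach space and $\mathbb{Y}$ any real Banach space (both of dimension greater than $1$). Then the pair $(\mathbb{X},\mathbb{Y})$ has sBPBp for compact operators.
   Context: $S_{\mathbb{X}}$ is the unit sphere. $\mathbb{X}$ is Kadets-Klee if $x_n\to x$ weakly and $\|x_n\|\to\|x\|$ imply $\|x_n-x\|\to0$. The pair $(\mathbb{X},\mathbb{Y})$ has sBPBp for compact operators if for every $\epsilon>0$ and every compact linear operator $T:\mathbb{X}\to\mathbb{Y}$ with $\|T\|=1$ there exists $\eta(\epsilon,T)>0$ such that whenever $x_0\in S_{\mathbb{X}}$ satisfies $\|Tx_0\|>1-\eta(\epsilon,T)$, there exists $x_1\in S_{\mathbb{X}}$ with $\|Tx_1\|=1$ and $\|x_1-x_0\|<\epsilon$. *)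

(* Defs.v *)
(* Real Banach spaces = completeNormedModType R, R : realType. *)
From HB Require Import structures.
From mathcomp Require Import all_boot all_order all_algebra.
From mathcomp Require Import all_classical all_reals all_analysis.
Set Implicit Arguments. Unset Strict Implicit. Unset Printing Implicit Defensive.
Import Order.TTheory GRing.Theory Num.Theory.
Import numFieldNormedType.Exports.
Local Open Scope classical_set_scope.
Local Open Scope ring_scope.

Section Defs.
Variable R : realType.

Definition is_linear (U V : lmodType R) (T : U -> V) : Prop :=
  forall (a : R) (x y : U), T (a *: x + y) = a *: T x + T y.

Definition dual_elt (X : normedModType R) (f : X -> R) : Prop :=
  is_linear (f : X -> R^o) /\ continuous f.

Definition weak_cvg (X : normedModType R) (u : nat -> X) (x : X) : Prop :=
  forall f : X -> R, dual_elt f -> (fun n => f (u n)) @ \oo --> f x.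

Definition kadets_klee (X : normedModType R) : Prop :=
  forall (u : nat -> X) (x : X), weak_cvg u x ->
    (fun n => `|u n|) @ \oo --> `|x| ->
    (fun n => `|u n - x|) @ \oo --> 0%R.

(* a bounded linear functional on the dual of X (an element of the bidual):
   linear on the dual and |phi f| <= C ||f|| (written without the dual norm:
   whenever |f x| <= M ||x|| for all x, |phi f| <= C M) *)
Definition bidual_elt (X : normedModType R) (phi : (X -> R) -> R) : Prop :=
  (forall (a : R) (f g : X -> R), dual_elt f -> dual_elt g ->
     phi (fun x => a * f x + g x) = a * phi f + phi g) /\
  exists C : R, forall (f : X -> R) (M : R), dual_elt f ->
     (forall x, `|f x| <= M * `|x|) -> `|phi f| <= C * M.

Definition reflexive_space (X : normedModType R) : Prop :=
  forall phi : (X -> R) -> R, bidual_elt phi ->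
    exists x : X, forall f : X -> R, dual_elt f -> phi f = f x.

Definition dim_gt1 (X : normedModType R) : Prop :=
  exists x y : X, forall a b : R, a *: x + b *: y = 0 -> a = 0 /\ b = 0.

Definition compact_operator (X Y : normedModType R) (T : X -> Y) : Prop :=
  is_linear T /\ compact (closure (T @` [set x : X | `|x| <= 1])).

Definition opnorm (X Y : normedModType R) (T : X -> Y) : R :=
  sup [set `|T x| | x in [set x : X | `|x| <= 1]].

Definition sBPBp_compact (X Y : normedModType R) : Prop :=
  forall eps : R, 0 < eps ->
  forall T : X -> Y, compact_operator T -> opnorm T = 1 ->
  exists eta : R, 0 < eta /\
    forall x0 : X, `|x0| = 1 -> `|T x0| > 1 - eta ->
      exists x1 : X, `|x1| = 1 /\ `|T x1| = 1 /\ `|x1 - x0| < eps.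

End Defs.

(* Main.v *)
Require Import Defs.
From HB Require Import structures.
From mathcomp Require Import all_boot all_order all_algebra.
From mathcomp Require Import all_classical all_reals all_analysis.
From mathcomp Require Import ring lra.
Set Implicit Arguments. Unset Strict Implicit. Unset Printing Implicit Defensive.
Import Order.TTheory GRing.Theory Num.Theory.
Import numFieldNormedType.Exports.
Local Open Scope classical_set_scope.
Local Open Scope ring_scope.


Section InfAux.
Context {R : realType}.
Lemma inf_le_mem (E : set R) (b e : R) : (forall y, E y -> b <= y) -> E e -> inf E <= e.
Proof. by move=> hb Ee; apply: ge_inf => //; exists b. Qed.
Lemma le_inf_all (E : set R) (a : R) : E !=set0 -> (forall y, E y -> a <= y) -> a <= inf E.
Proof. by move=> ne ha; apply: lb_le_inf. Qed.
End InfAux.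

Section HahnBanach.
Context {R : realType} {V : lmodType R}.

Definition sublin (p : V -> R) :=
  (forall x y, p (x + y) <= p x + p y) /\ (forall (c : R) x, 0 <= c -> p (c *: x) = c * p x).

Lemma sublin0 p : sublin p -> p 0 = 0.
Proof. by move=> hp; rewrite -(scale0r 0) hp.2 // mul0r. Qed.

Lemma sublin_lb p x : sublin p -> - p (- x) <= p x.
Proof.
move=> hp; have := hp.1 x (- x); rewrite subrr sublin0 //.
by move=> h; rewrite -subr_ge0 opprK.
Qed.

Definition shift (q : V -> R) (a : V) (x : V) : R :=
  inf [set q (x + t *: a) - t * q a | t in [set t : R | 0 <= t]].

Lemma shift_mem_lb q a x t : sublin q -> 0 <= t ->
  - q (- x) <= q (x + t *: a) - t * q a.
Proof.
move=> hq t0; have h := hq.1 (x + t *: a) (- x).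
rewrite addrC addKr (hq.2 _ _ t0) in h; lra.
Qed.

Lemma shift_le q a x t : sublin q -> 0 <= t ->
  shift q a x <= q (x + t *: a) - t * q a.
Proof.
move=> hq t0; apply: (@inf_le_mem _ _ (- q (- x))); last by exists t.
by move=> _ [s s0 <-]; apply: shift_mem_lb.
Qed.

Lemma le_shift q a x b : sublin q ->
  (forall t, 0 <= t -> b <= q (x + t *: a) - t * q a) -> b <= shift q a x.
Proof.
move=> hq hb; apply: le_inf_all; first by eexists; exists 0; rewrite /= ?lexx.
by move=> _ [s s0 <-]; apply: hb.
Qed.

Lemma shift_leq q a x : sublin q -> shift q a x <= q x.
Proof.
by move=> hq; have := shift_le a x hq (lexx 0); rewrite scale0r addr0 mul0r subr0.
Qed.

Lemma shift_sublin q a : sublin q -> sublin (shift q a).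
Proof.
move=> hq; split.
  move=> x y.
  have key : forall t s, 0 <= t -> 0 <= s ->
      shift q a (x + y) <= (q (x + t *: a) - t * q a) + (q (y + s *: a) - s * q a).
    move=> t s t0 s0; have ts0 : 0 <= t + s by rewrite addr_ge0.
    apply: (le_trans (shift_le a (x + y) hq ts0)).
    have h := hq.1 (x + t *: a) (y + s *: a).
    rewrite addrACA -scalerDl in h; lra.
  rewrite -lerBlDl; apply: le_shift => // s s0.
  rewrite lerBlDl -lerBlDr; apply: le_shift => // t t0.
  by rewrite lerBlDr; apply: key.
move=> c x; rewrite le_eqVlt => /orP[/eqP <-|c0].
  rewrite scale0r mul0r; apply/eqP; rewrite eq_le; apply/andP; split.
    by have := shift_le a 0 hq (lexx 0); rewrite scale0r !addr0 mul0r subr0 (sublin0 hq).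
  apply: le_shift => // t t0; rewrite add0r (hq.2 _ _ t0) subrr //.
apply/eqP; rewrite eq_le; apply/andP; split.
  rewrite -ler_pdivrMl //; apply: le_shift => // t t0.
  rewrite ler_pdivrMl //.
  have ct0 : 0 <= c * t by rewrite mulr_ge0 // ltW.
  apply: (le_trans (shift_le a (c *: x) hq ct0)).
  rewrite -scalerA -scalerDr (hq.2 _ _ (ltW c0)); lra.
apply: le_shift => // t t0.
have tc0 : 0 <= t / c by rewrite divr_ge0 // ltW.
have := shift_le a x hq tc0; rewrite -(ler_pM2l c0) => h; apply: (le_trans h).
have e : c * (t / c) = t by rewrite mulrCA divff ?gt_eqF // mulr1.
rewrite mulrBr -(hq.2 _ _ (ltW c0)) scalerDr scalerA e mulrA e; lra.
Qed.

End HahnBanach.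


Section HB2.
Context {R : realType} {V : lmodType R}.

Lemma minimal_linear (q : V -> R) : sublin q ->
  (forall a x, q x <= shift q a x) ->
  forall c x y, q (c *: x + y) = c * q x + q y.
Proof.
move=> hq hmin.
have add : forall x y, q (x + y) = q x + q y.
  move=> x y; apply/eqP; rewrite eq_le hq.1 /=.
  have := le_trans (hmin y x) (shift_le y x hq ler01).
  by rewrite scale1r mul1r lerBrDr.
have q0 := sublin0 hq.
have neg : forall x, q (- x) = - q x.
  by move=> x; apply/eqP; rewrite -addr_eq0 addrC -add subrr q0.
move=> c x y; rewrite add; congr (_ + _).
have [c0|c0] := leP 0 c; first exact: hq.2.
have := hq.2 (- c) (- x); rewrite oppr_ge0 ltW // => /(_ isT).
by rewrite scaleNr scalerN opprK neg mulrN mulNr opprK.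
Qed.

Lemma HB_lin (p : V -> R) : sublin p ->
  exists f : V -> R, (forall c x y, f (c *: x + y) = c * f x + f y) /\ forall x, f x <= p x.
Proof.
move=> hp.
pose T := {q : V -> R | sublin q /\ forall x, q x <= p x}.
pose Rl := fun q1 q2 : T => `[< forall x, sval q2 x <= sval q1 x >].
have p0 : sublin p /\ forall x, p x <= p x by split.
have [t tmax] : exists t, premaximal Rl t.
  apply: (@ZL_preorder T (exist _ p p0) Rl).
  - by move=> q; apply/asboolP.
  - by move=> a b c /asboolP hab /asboolP hbc; apply/asboolP => x; apply: le_trans (hab x).
  move=> A Atot; have [[s0 As0]|A0] := pselect (A !=set0); last first.
    exists (exist _ p p0) => s As; exfalso; apply: A0; by exists s.
  pose m x := inf [set sval s x | s in A].
  have mlb : forall x y, [set sval s x | s in A] y -> - p (- x) <= y.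
    move=> x _ [s As <-]; have [hs sp] := svalP s.
    apply: le_trans (sublin_lb x hs); by rewrite lerN2.
  have mle : forall s x, A s -> m x <= sval s x.
    by move=> s x As; apply: (inf_le_mem (mlb x)); exists s.
  have gem : forall x b, (forall s, A s -> b <= sval s x) -> b <= m x.
    move=> x b hb; apply: le_inf_all; first by exists (sval s0 x), s0.
    by move=> _ [s As <-]; apply: hb.
  have msub : sublin m.
    split.
      move=> x y; rewrite -lerBlDl; apply: (gem) => s2 As2.
      rewrite lerBlDl -lerBlDr; apply: (gem) => s1 As1; rewrite lerBlDr.
      have [hs1 _] := svalP s1; have [hs2 _] := svalP s2.
      have [/asboolP h|/asboolP h] := Atot _ _ As1 As2.
        apply: (le_trans (mle _ _ As2)); apply: (le_trans (hs2.1 x y)).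
        by rewrite lerD2r.
      apply: (le_trans (mle _ _ As1)); apply: (le_trans (hs1.1 x y)).
      by rewrite lerD2l.
    move=> c x; rewrite le_eqVlt => /orP[/eqP <-|c0].
      rewrite scale0r mul0r; apply/eqP; rewrite eq_le; apply/andP; split.
        by apply: (le_trans (mle _ _ As0)); rewrite sublin0 //; case: (svalP s0).
      by apply: (gem) => s As; rewrite sublin0 //; case: (svalP s).
    apply/eqP; rewrite eq_le; apply/andP; split.
      rewrite -ler_pdivrMl //; apply: (gem) => s As; rewrite ler_pdivrMl //.
      have [hs _] := svalP s; rewrite -(hs.2 _ _ (ltW c0)); exact: (mle).
    apply: (gem) => s As; have [hs _] := svalP s; rewrite (hs.2 _ _ (ltW c0)).
    by rewrite ler_pM2l //; apply: (mle).
  have mp : forall x, m x <= p x.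
    by move=> x; apply: (le_trans (mle _ _ As0)); case: (svalP s0) => _; apply.
  exists (exist _ m (conj msub mp)) => s As; apply/asboolP => x /=; exact: (mle).
have [ht htp] := svalP t.
exists (sval t); split; last exact: htp.
apply: minimal_linear => // a x.
have sh : sublin (shift (sval t) a) /\ forall x, shift (sval t) a x <= p x.
  split; first exact: shift_sublin.
  by move=> y; apply: le_trans (shift_leq _ _ ht) (htp y).
have := tmax (exist _ _ sh); rewrite /Rl /= => h.
have /h /asboolP : `[< forall x, shift (sval t) a x <= sval t x >].
  by apply/asboolP => y; apply: shift_leq.
by apply.
Qed.

Theorem HB_main (p : V -> R) (x0 : V) : sublin p ->
  exists f : V -> R, (forall c x y, f (c *: x + y) = c * f x + f y) /\
    (forall x, f x <= p x) /\ f x0 = p x0.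
Proof.
move=> hp; have [f [fl fp]] := HB_lin (shift_sublin x0 hp).
exists f; split => //; split.
  by move=> x; apply: le_trans (fp x) (shift_leq _ _ hp).
have f0 : f 0 = 0 by have := fl 1 0 0; rewrite scale1r addr0 mul1r => h; lra.
have fN : f (- x0) = - f x0.
  apply/eqP; rewrite -addr_eq0 addrC; have := fl 1 x0 (- x0).
  by rewrite scale1r mul1r subrr f0 => <-.
apply/eqP; rewrite eq_le (le_trans (fp x0) (shift_leq _ _ hp)) /=.
have := le_trans (fp (- x0)) (shift_le x0 (- x0) hp ler01).
by rewrite scale1r addNr (sublin0 hp) mul1r sub0r fN lerN2.
Qed.

End HB2.


Section Fa.
Context {R : realType} {X : normedModType R}.

Lemma lin_bounded_cont (f : X -> R) (K : R) :
  (forall c x y, f (c *: x + y) = c * f x + f y) ->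
  (forall x, `|f x| <= K * `|x|) -> continuous f.
Proof.
move=> fl fK x; apply/cvgrPdist_lt => e e0.
have K1 : 0 < `|K| + 1 by rewrite ltr_pwDr // normr_ge0.
have d0 : 0 < e / (`|K| + 1) by rewrite divr_gt0.
apply/nbhs_ballP; exists (e / (`|K| + 1)) => // y.
rewrite -ball_normE /ball_ => hy.
have -> : f x = f (x - y) + f y by have := fl 1 (x - y) y; rewrite scale1r mul1r subrK.
rewrite addrK.
apply: (le_lt_trans (fK _)); apply: (@le_lt_trans _ _ ((`|K| + 1) * `|x - y|)).
  apply: ler_wpM2r => //; apply: le_trans (ler_norm K) _; lra.
by rewrite -ltr_pdivlMl // mulrC.
Qed.

Lemma HB_dual (p : X -> R) (x0 : X) : sublin p -> (forall x, p x <= `|x|) ->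
  exists f : X -> R, dual_elt f /\ (forall x, f x <= p x) /\ f x0 = p x0 /\
    forall x, `|f x| <= `|x|.
Proof.
move=> hp hpn; have [f [fl [fp fx0]]] := HB_main x0 hp.
have fb : forall x, `|f x| <= `|x|.
  move=> x; rewrite ler_norml; apply/andP; split; last exact: le_trans (fp x) (hpn x).
  have fN : f (- x) = - f x.
    have := fl (-1) x 0; have := fl 1 0 0; rewrite scale1r addr0 mul1r => h0.
    have f0 : f 0 = 0 by lra.
    by rewrite addr0 scaleN1r f0 addr0 mulN1r.
  rewrite lerNl -fN; apply: le_trans (fp _) _; by rewrite -normrN; apply: hpn.
exists f; split; last by [].
split; first by move=> a x y; exact: fl.
apply: (@lin_bounded_cont _ 1) => // x; rewrite mul1r; exact: fb.
Qed.

Lemma sublin_norm : sublin (fun x : X => `|x|).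
Proof.
split; first by move=> x y; exact: ler_normD.
by move=> c x c0; rewrite normrZ ger0_norm.
Qed.

Lemma norming (z : X) : exists f : X -> R, dual_elt f /\ f z = `|z| /\
  forall x, `|f x| <= `|x|.
Proof.
have [f [df [_ [fz fb]]]] := HB_dual z sublin_norm (fun x => lexx _).
by exists f.
Qed.

Lemma dual_lin (f : X -> R) : dual_elt f -> forall c x y, f (c *: x + y) = c * f x + f y.
Proof. by case=> fl _ c x y; exact: fl. Qed.

Lemma dual0 (f : X -> R) : dual_elt f -> f 0 = 0.
Proof. by move=> /dual_lin fl; have := fl 1 0 0; rewrite scale1r addr0 mul1r => h; lra. Qed.

Lemma dualZ (f : X -> R) c x : dual_elt f -> f (c *: x) = c * f x.
Proof. by move=> df; have := dual_lin df c x 0; rewrite addr0 dual0 // addr0. Qed.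

Lemma dualD (f : X -> R) x y : dual_elt f -> f (x + y) = f x + f y.
Proof. by move=> df; have := dual_lin df 1 x y; rewrite scale1r mul1r. Qed.

Lemma dualN (f : X -> R) x : dual_elt f -> f (- x) = - f x.
Proof. by move=> df; rewrite -scaleN1r dualZ // mulN1r. Qed.

Lemma dualB (f : X -> R) x y : dual_elt f -> f (x - y) = f x - f y.
Proof. by move=> df; rewrite dualD // dualN. Qed.

Lemma dual_bounded (f : X -> R) : dual_elt f -> exists M, 0 <= M /\ forall x, `|f x| <= M * `|x|.
Proof.
move=> df; have /cvgrPdist_lt /(_ 1 ltr01) := df.2 0.
move=> /nbhs_ballP [d d0 hd].
exists (2 / d); split; first by rewrite divr_ge0 // ltW.
move=> x; have [->|x0] := eqVneq x 0; first by rewrite dual0 // !normr0 mulr0.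
have nx : 0 < `|x| by rewrite normr_gt0.
pose y := (d / 2 / `|x|) *: x.
have hy : ball (0 : X) d y.
  rewrite -ball_normE /ball_ /= sub0r normrN /y normrZ ger0_norm; last first.
    by rewrite !divr_ge0 // ltW.
  rewrite divfK ?gt_eqF //; have d0r : (0:R) < d := d0; lra.
have := hd _ hy; rewrite /= dual0 // sub0r normrN /y dualZ // normrM ger0_norm; last first.
  by rewrite !divr_ge0 // ltW.
move=> h.
have e : `|f x| = (2 * `|x| / d) * (d / 2 / `|x| * `|f x|).
  by field; rewrite ?gt_eqF.
have c0 : 0 <= 2 * `|x| / d by rewrite !mulr_ge0 // ?invr_ge0 ltW.
rewrite e; apply: (le_trans (ler_wpM2l c0 (ltW h))).
by rewrite mulr1 mulrAC.
Qed.

End Fa.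


Lemma ultra_cvg_cluster {T : topologicalType} (W : set_system nat) (g : nat -> T) (y : T) :
  UltraFilter W -> cluster (g @ W) y -> g @ W --> y.
Proof.
move=> WU hc N hN.
have [//|hC] := in_ultra_setVsetC (g @^-1` N) WU.
have hC' : (g @ W) (~` N) by exact: hC.
by have [z [nz zN]] := hc _ _ hC' hN.
Qed.

Lemma ultra_compact_lim {T : topologicalType} (K : set T) (W : set_system nat) (g : nat -> T) :
  UltraFilter W -> compact K -> (forall n, K (g n)) -> exists2 y, K y & g @ W --> y.
Proof.
move=> WU hK hg.
have hWK : W (g @^-1` K) by apply: filterS (fun n _ => hg n) (@filterT _ W _).
have PF : ProperFilter (g @ W) by exact: fmap_proper_filter.
have [y [Ky cy]] := hK (g @ W) PF hWK; exists y => //; exact: ultra_cvg_cluster.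
Qed.

Lemma cvg_finer {T : topologicalType} (F G : set_system nat) (g : nat -> T) (l : T) :
  F `<=` G -> g @ F --> l -> g @ G --> l.
Proof. by move=> FG h N hN; apply: FG; exact: h. Qed.

Section Ul.
Context {R : realType} {X : normedModType R}.

Lemma dual_comb (f g : X -> R) (a : R) : dual_elt f -> dual_elt g ->
  dual_elt (fun x => a * f x + g x).
Proof.
move=> df dg; have [M1 [M10 h1]] := dual_bounded df; have [M2 [M20 h2]] := dual_bounded dg.
have hl : forall c x y, a * f (c *: x + y) + g (c *: x + y) = c * (a * f x + g x) + (a * f y + g y).
  by move=> c x y; rewrite (dual_lin df) (dual_lin dg); ring.
split; first by move=> c x y; exact: hl.
apply: (@lin_bounded_cont _ _ _ (`|a| * M1 + M2)) => // x.
apply: (le_trans (ler_normD _ _)); rewrite normrM mulrDl -mulrA.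
by apply: lerD => //; rewrite ler_wpM2l.
Qed.

Lemma ultra_rep : reflexive_space X -> (exists z : X, z != 0) ->
  forall (W : set_system nat) (v : nat -> X), UltraFilter W -> (forall n, `|v n| <= 1) ->
  exists y, forall f, dual_elt f -> (fun n => f (v n)) @ W --> f y.
Proof.
move=> hX [z z0] W v WU hv.
have lims : forall f, dual_elt f -> exists M, (forall x, `|f x| <= M * `|x|) /\
    exists2 L, `|L| <= M & (fun n => f (v n)) @ W --> L.
  move=> f df; have [M [M0 hM]] := dual_bounded df; exists M; split => //.
  have hK : forall n, [set` `[- M, M]] (f (v n)).
    move=> n; rewrite /= in_itv /= -ler_norml.
    by apply: (le_trans (hM _)); rewrite -[leRHS]mulr1 ler_wpM2l.
  have [L KL hL] := @ultra_compact_lim _ [set` `[- M, M]] W (fun n => f (v n)) WU (@segment_compact R (- M) M) hK.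
  by exists L => //; move: KL; rewrite /= in_itv /= -ler_norml.
pose phi (f : X -> R) := lim ((fun n => f (v n)) @ W).
have phiE : forall f, dual_elt f -> (fun n => f (v n)) @ W --> phi f.
  by move=> f df; have [M [_ [L _ hL]]] := lims f df; rewrite /phi (cvg_lim _ hL).
have bid : bidual_elt phi.
  split.
    move=> a f g df dg; rewrite {1}/phi; apply: cvg_lim => //.
    apply: cvgD; last exact: phiE.
    by apply: cvgMl_tmp; exact: phiE.
  exists 1 => f M df hM.
  have [M' [_ [L hL cL]]] := lims f df.
  have -> : phi f = L by rewrite /phi (cvg_lim _ cL).
  have [M0|M0] := leP 0 M; last first.
    have := hM z; rewrite leNgt => /negP; case.
    by apply: (lt_le_trans _ (normr_ge0 _)); rewrite nmulr_rlt0 // normr_gt0.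
  have : (fun n => f (v n)) @ W --> L by [].
  have hK : forall n, [set` `[- M, M]] (f (v n)).
    move=> n; rewrite /= in_itv /= -ler_norml.
    by apply: (le_trans (hM _)); rewrite -[leRHS]mulr1 ler_wpM2l.
  have [L' KL' hL'] := @ultra_compact_lim _ [set` `[- M, M]] W (fun n => f (v n)) WU (@segment_compact R (- M) M) hK.
  move=> hL2; have <- := cvg_unique (@Rhausdorff R) hL' hL2.
  by rewrite mul1r; move: KL'; rewrite /= in_itv /= -ler_norml.
have [y hy] := hX phi bid.
by exists y => f df; rewrite -hy //; exact: phiE.
Qed.

End Ul.


Section Sp.
Context {R : realType} {X : normedModType R}.
Context (u : nat -> X).

Inductive spanP : X -> Prop :=
| sp0 : spanP 0
| spS (c : R) (i : nat) (z : X) : spanP z -> spanP (c *: u i + z).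

Lemma spanD z1 z2 : spanP z1 -> spanP z2 -> spanP (z1 + z2).
Proof.
elim=> [|c i w hw IH] h2; first by rewrite add0r.
by rewrite -addrA; apply: spS; exact: IH.
Qed.

Lemma spanZ a z : spanP z -> spanP (a *: z).
Proof.
elim=> [|c i w hw IH]; first by rewrite scaler0; exact: sp0.
by rewrite scalerDr scalerA; apply: spS.
Qed.

Lemma spanN z : spanP z -> spanP (- z).
Proof. by move=> h; rewrite -scaleN1r; apply: spanZ. Qed.

Lemma span_u i : spanP (u i).
Proof. by rewrite -[u i]addr0 -[u i]scale1r; apply: spS; exact: sp0. Qed.

Definition pd (w : X) : R := inf [set `|w - s| | s in spanP].

Lemma pd_le w s : spanP s -> pd w <= `|w - s|.
Proof.
move=> hs; apply: (@inf_le_mem _ _ 0); last by exists s.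
by move=> _ [t _ <-].
Qed.

Lemma le_pd w b : (forall s, spanP s -> b <= `|w - s|) -> b <= pd w.
Proof.
move=> hb; apply: le_inf_all; first by exists `|w - 0|, 0 => //; exact: sp0.
by move=> _ [t ht <-]; apply: hb.
Qed.

Lemma pd_ge0 w : 0 <= pd w.
Proof. by apply: le_pd. Qed.

Lemma pd_norm w : pd w <= `|w|.
Proof. by have := pd_le w sp0; rewrite subr0. Qed.

Lemma pd_span s : spanP s -> pd s = 0.
Proof.
move=> hs; apply/eqP; rewrite eq_le pd_ge0 andbT.
by have := pd_le s hs; rewrite subrr normr0.
Qed.

Lemma pd_sublin : sublin pd.
Proof.
split.
  move=> x y; rewrite -lerBlDl; apply: le_pd => s2 h2.
  rewrite lerBlDl -lerBlDr; apply: le_pd => s1 h1; rewrite lerBlDr.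
  apply: (le_trans (pd_le _ (spanD h1 h2))).
  have -> : x + y - (s1 + s2) = (x - s1) + (y - s2) by rewrite opprD addrACA.
  exact: ler_normD.
move=> c x; rewrite le_eqVlt => /orP[/eqP <-|c0].
  by rewrite scale0r mul0r pd_span //; exact: sp0.
apply/eqP; rewrite eq_le; apply/andP; split.
  rewrite -ler_pdivrMl //; apply: le_pd => s hs; rewrite ler_pdivrMl //.
  apply: (le_trans (pd_le _ (spanZ c hs))).
  by rewrite -scalerBr normrZ gtr0_norm.
apply: le_pd => s hs.
have := pd_le x (spanZ c^-1 hs); rewrite -(ler_pM2l c0) => h; apply: (le_trans h).
rewrite -{1}(gtr0_norm c0) -normrZ scalerBr scalerA divff ?gt_eqF //.
by rewrite scale1r.
Qed.

Lemma pd_close w e : pd w = 0 -> 0 < e -> exists2 s, spanP s & `|w - s| < e.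
Proof.
move=> h0 e0; have : inf [set `|w - s| | s in spanP] < e by rewrite -/(pd w) h0.
move=> /inf_lt [].
  by exists `|w - 0|, 0 => //; exact: sp0.
by move=> _ [s hs <-] hlt; exists s.
Qed.

Lemma weak_in_span (W : set_system nat) (v : nat -> X) (y : X) :
  UltraFilter W -> (forall n, spanP (v n)) ->
  (forall f, dual_elt f -> (fun n => f (v n)) @ W --> f y) -> pd y = 0.
Proof.
move=> WU hv hy.
have [f [df [fp [fy _]]]] := HB_dual y pd_sublin pd_norm.
have f0 : forall s, spanP s -> f s = 0.
  move=> s hs; apply/eqP; rewrite eq_le; apply/andP; split.
    by apply: (le_trans (fp s)); rewrite pd_span.
  have := fp (- s); rewrite dualN // pd_span ?oppr_le0 //; exact: spanN.
have e : (fun n => f (v n)) = fun _ => 0 by apply: funext => n; apply: f0.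
have := hy f df; rewrite e => h.
have := cvg_unique (@Rhausdorff R) (@cvg_cst _ (0:R) _ W _) h.
by rewrite -fy => ->.
Qed.

Definition coefQ (t : (nat * nat) * int) : R := (t.2)%:~R / (t.1.2).+1%:R.
Definition evalQ (s : seq ((nat * nat) * int)) : X :=
  foldr (fun t z => coefQ t *: u t.1.1 + z) 0 s.
Definition enumQ (m : nat) : X :=
  match unpickle m with Some s => evalQ s | None => 0 end.

Lemma enumQ_pickle s : enumQ (pickle s) = evalQ s.
Proof. by rewrite /enumQ pickleK. Qed.

Lemma dense z e : spanP z -> 0 < e -> exists m, `|z - enumQ m| < e.
Proof.
move=> hz; suff : forall e, 0 < e -> exists s, `|z - evalQ s| < e.
  by move=> /(_ e) h /h [s hs]; exists (pickle s); rewrite enumQ_pickle.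
elim: hz {e} => [|c i w hw IH] e e0.
  by exists [::]; rewrite /= subr0 normr0.
have e20 : 0 < e / 2 by rewrite divr_gt0.
have [s hs] := IH _ e20.
pose N := Num.truncn (2 * `|u i| / e).
pose k := Num.floor (c * N.+1%:R).
exists (((i, N), k) :: s) => /=.
set q := coefQ _.
have N0 : 0 < N.+1%:R :> R by rewrite ltr0n.
have hq0 : 0 <= c - q.
  rewrite subr_ge0 /q /coefQ /= ler_pdivrMr //; exact: real_floor_le (num_real _).
have hq1 : c - q < N.+1%:R^-1.
  have hk := real_floorD1_gt (num_real (c * N.+1%:R)).
  rewrite rmorphD rmorph1 -/k in hk.
  have -> : c - q = (c * N.+1%:R - k%:~R) / N.+1%:R.
    by rewrite /q /coefQ /=; field; rewrite gt_eqF.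
  rewrite -[X in _ < X]mul1r ltr_pM2r ?invr_gt0 //; lra.
have hN : 2 * `|u i| / e < N.+1%:R by exact: truncnS_gt.
have hu : (c - q) * `|u i| < e / 2.
  apply: (@le_lt_trans _ _ (`|u i| / N.+1%:R)).
    by rewrite mulrC ler_wpM2l // ltW.
  rewrite ltr_pdivrMr //; move: hN; rewrite ltr_pdivrMr //; lra.
have -> : c *: u i + w - (q *: u i + evalQ s) = (c - q) *: u i + (w - evalQ s).
  by rewrite scalerBl opprD addrACA.
apply: (le_lt_trans (ler_normD _ _)); rewrite normrZ ger0_norm //; lra.
Qed.

End Sp.


Section Es.
Context {R : realType} {X : normedModType R}.

Lemma sep (u : nat -> X) (g : nat -> X -> R) :
  (forall m, dual_elt (g m) /\ g m (enumQ u m) = `|enumQ u m| /\ forall x, `|g m x| <= `|x|) ->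
  forall y1 y2, pd u y1 = 0 -> pd u y2 = 0 -> (forall m, g m y1 = g m y2) -> y1 = y2.
Proof.
move=> hg y1 y2 h1 h2 hm; apply/eqP; rewrite -subr_eq0; apply/negPn/negP => hne.
have d0 : 0 < `|y1 - y2| by rewrite normr_gt0.
set d := `|y1 - y2| in d0.
have e0 : 0 < d / 8 by rewrite divr_gt0.
have [s1 hs1 c1] := pd_close h1 e0.
have [s2 hs2 c2] := pd_close h2 e0.
have [m hm'] := dense (spanD hs1 (spanN hs2)) e0.
have [dg [ge gb]] := hg m.
have z0 : g m (y1 - y2) = 0 by rewrite dualB // hm subrr.
have h3 : `|y1 - y2 - enumQ u m| < 3 * (d / 8).
  apply: (le_lt_trans (ler_distD (s1 - s2) _ _)).
  have -> : y1 - y2 - (s1 - s2) = (y1 - s1) - (y2 - s2).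
    by rewrite !opprB addrACA [in RHS]addrACA; congr (_ + _); rewrite addrC.
  apply: (@le_lt_trans _ _ (`|y1 - s1| + `|y2 - s2| + `|s1 - s2 - enumQ u m|)).
    by rewrite lerD2r; apply: (le_trans (ler_normB _ _)).
  lra.
have h4 : `|enumQ u m| < 3 * (d / 8).
  rewrite -ge; have -> : enumQ u m = (enumQ u m - (y1 - y2)) + (y1 - y2) by rewrite subrK.
  rewrite dualD // z0 addr0; apply: (le_lt_trans (ler_norm _)).
  by apply: (le_lt_trans (gb _)); rewrite distrC.
have : d <= `|y1 - y2 - enumQ u m| + `|enumQ u m|.
  by rewrite /d -{1}(subrK (enumQ u m) (y1 - y2)); exact: ler_normD.
lra.
Qed.

Lemma ES : reflexive_space X -> (exists z : X, z != 0) ->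
  forall xs : nat -> X, (forall n, `|xs n| <= 1) ->
  exists phi : nat -> nat, (forall k, (k <= phi k)%N) /\
    exists x, weak_cvg (fun k => xs (phi k)) x.
Proof.
move=> hX nz xs hb.
have [U [UU sU]] := ultraFilterLemma eventually_filter.
have [y hy] := ultra_rep hX nz UU hb.
have hpy : pd xs y = 0 := weak_in_span UU (fun n => span_u xs n) hy.
have hgex : forall m, exists f : X -> R, dual_elt f /\
    f (enumQ xs m) = `|enumQ xs m| /\ forall x, `|f x| <= `|x|.
  by move=> m; have [f [df [fe fb]]] := norming (enumQ xs m); exists f.
have [g hg] := choice hgex.
pose A k n := forall j : 'I_k.+1, `|g j y - g j (xs n)| < (k.+1%:R)^-1.
have hA : forall k, \forall n \near U, A k n.
  move=> k; apply: filter_forall => j.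
  by apply: cvgr_dist_lt; [exact: hy (hg j).1|rewrite invr_gt0 ltr0n].
have hnext : forall km : nat * nat, exists n, A km.1 n /\ (km.2 < n)%N.
  case=> k m /=.
  have hm : \forall n \near U, (m < n)%N by apply: sU; exists m.+1.
  by have [n [An mn]] := filter_ex (filterI (hA k) hm); exists n.
have [nx hnx] := choice hnext.
pose phi := fix F k := if k is k'.+1 then nx (k, F k') else nx (0%N, 0%N).
have phiA : forall k, A k (phi k).
  by case=> [|k]; [exact: (hnx (0%N, 0%N)).1|exact: (hnx (k.+1, phi k)).1].
have phigt : forall k, (k < phi k)%N.
  elim=> [|k IH]; first exact: (hnx (0%N, 0%N)).2.
  have : (phi k < phi k.+1)%N by exact: (hnx (k.+1, phi k)).2.
  by apply: leq_ltn_trans.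
exists phi; split; first by move=> k; apply: ltnW.
have hj : forall j, (fun k => g j (xs (phi k))) @ \oo --> g j y.
  move=> j; apply/cvgrPdist_lt => e e0.
  exists (maxn j (Num.truncn e^-1)) => // k /= /[!geq_max] /andP[jk tk].
  have jk1 : (j < k.+1)%N by rewrite ltnS.
  have := phiA k (Ordinal jk1) => /= h; apply: (lt_le_trans h).
  rewrite -[leRHS]invrK lef_pV2 ?posrE ?invr_gt0 ?ltr0n //.
  apply: ltW; apply: (lt_le_trans (truncnS_gt _)); by rewrite ler_nat.
exists y => f df; apply: contrapT => hnot.
have [eps [eps0 heps]] : exists eps, 0 < eps /\
    ~ (\forall k \near \oo, `|f y - f (xs (phi k))| < eps).
  apply: contrapT => H; apply: hnot; apply/cvgrPdist_lt => eps e0.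
  apply: contrapT => Hn; apply: H; by exists eps.
pose S k := eps <= `|f y - f (xs (phi k))|.
have PG : ProperFilter (within S \oo).
  apply: Build_ProperFilter_ex.
  move=> P hP; apply: contrapT => hn; apply: heps.
  have hP' : \forall k \near \oo, S k -> P k := hP.
  apply: filterS hP' => k hk; rewrite ltNge; apply/negP => hS; apply: hn.
  by exists k; apply: hk.
have [V [VU sV]] := ultraFilterLemma PG.
have tails : \oo `<=` V.
  move=> P hP; apply: sV; rewrite /within; apply: filterS hP => k hk _; exact: hk.
have [z hz] := ultra_rep hX nz VU (fun k => hb (phi k)).
have hpz : pd xs z = 0 := weak_in_span VU (fun k => span_u xs (phi k)) hz.
have zy : z = y.
  apply: (sep hg) => // m.
  exact: (cvg_unique (@Rhausdorff R) (hz _ (hg m).1) (cvg_finer tails (hj m))).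
have hVS : V S by apply: sV; rewrite /within; apply: nearW => k.
have hlt : \forall k \near V, `|f y - f (xs (phi k))| < eps.
  by rewrite -zy; apply: cvgr_dist_lt; [exact: hz|].
have [k [h1 h2]] := filter_ex (filterI hVS hlt).
by move: h1; rewrite /S leNgt h2.
Qed.

End Es.


Lemma lip_cont {R : realType} {X Y : normedModType R} (T : X -> Y) :
  (forall x y, `|T x - T y| <= `|x - y|) -> continuous T.
Proof.
move=> hT x; apply/cvgrPdist_lt => e e0; apply/nbhs_ballP; exists e => // y.
rewrite -ball_normE /ball_ /= => hy; exact: le_lt_trans (hT x y) hy.
Qed.

Theorem theorem2p12 (R : realType) (X Y : completeNormedModType R) :
  reflexive_space X -> kadets_klee X -> dim_gt1 X -> dim_gt1 Y ->
  sBPBp_compact X Y.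
Proof.
move=> hX hKK [a [b hab]] _ eps e0 T [Tlin Tcomp] Tn1.
have nz : exists z : X, z != 0.
  exists a; apply/eqP => a0; have := hab 1 0.
  rewrite a0 scaler0 scale0r addr0 => /(_ erefl) [h _].
  by move/eqP: h; rewrite oner_eq0.
have T0 : T 0 = 0.
  have := Tlin 1 0 0; rewrite !scale1r addr0 -{1}[T 0]addr0 => /addrI.
  by move/esym.
have TZ : forall c x, T (c *: x) = c *: T x.
  by move=> c x; have := Tlin c x 0; rewrite !addr0 T0 addr0.
have TD : forall x y, T (x + y) = T x + T y.
  by move=> x y; have := Tlin 1 x y; rewrite !scale1r.
have TB : forall x y, T (x - y) = T x - T y.
  by move=> x y; rewrite TD -scaleN1r TZ scaleN1r.
have [M [_ hM]] := compact_bounded Tcomp.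
have hM1 : forall y, closure (T @` [set x : X | `|x| <= 1]) y -> `|y| <= M + 1.
  by apply: hM; rewrite ltrDl.
have hub : has_ubound [set `|T x| | x in [set x : X | `|x| <= 1]].
  exists (M + 1) => _ [x hx <-]; apply: hM1; apply: subset_closure; by exists x.
have Tle1 : forall x, `|x| <= 1 -> `|T x| <= 1.
  move=> x hx; rewrite -Tn1 /opnorm; apply: (ub_le_sup hub); by exists x.
have Tle : forall x, `|T x| <= `|x|.
  move=> x; have [->|x0] := eqVneq x 0; first by rewrite T0 !normr0.
  have nx : 0 < `|x| by rewrite normr_gt0.
  have hx1 : `| `|x|^-1 *: x| <= 1.
    rewrite normrZ ger0_norm; last by rewrite invr_ge0 ltW.
    by rewrite mulVf ?gt_eqF.
  have := Tle1 _ hx1; rewrite TZ normrZ ger0_norm; last by rewrite invr_ge0 ltW.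
  by rewrite ler_pdivrMl // mulr1.
have Tcont : continuous T by apply: lip_cont => x y; rewrite -TB; exact: Tle.
apply: contrapT => H.
have hn : forall n : nat, exists x0 : X, `|x0| = 1 /\ 1 - (n.+1%:R)^-1 < `|T x0| /\
    forall x1, `|x1| = 1 -> `|T x1| = 1 -> eps <= `|x1 - x0|.
  move=> n; apply: contrapT => hn; apply: H; exists (n.+1%:R^-1); split.
    by rewrite invr_gt0 ltr0n.
  move=> x0 h0 h1; apply: contrapT => hno; apply: hn; exists x0; split => //; split => //.
  move=> x1 hx1 hT1; rewrite leNgt; apply/negP => hlt; apply: hno; by exists x1.
have [xs hxs] := choice hn.
have hb : forall n, `|xs n| <= 1 by move=> n; rewrite (hxs n).1.
have [phi [hphi [x hw]]] := ES hX nz hb.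
pose u k := xs (phi k).
have hu1 : forall k, `|u k| = 1 by move=> k; exact: (hxs (phi k)).1.
have hTu : (fun k => `|T (u k)|) @ \oo --> (1 : R).
  apply/cvgrPdist_lt => e e0'.
  exists (Num.truncn e^-1) => // k /= hk.
  have h1 := (hxs (phi k)).2.1; have h2 := Tle1 _ (hb (phi k)).
  rewrite -/(u k) in h1.
  have h3 : (phi k).+1%:R^-1 <= (k.+1%:R)^-1 :> R.
    by rewrite lef_pV2 ?posrE ?ltr0n // ler_nat ltnS.
  have h4 : (k.+1%:R)^-1 < e.
    rewrite -[ltRHS]invrK ltf_pV2 ?posrE ?invr_gt0 ?ltr0n //.
    apply: (lt_le_trans (truncnS_gt _)); by rewrite ler_nat.
  rewrite /u in h1 h2 *; rewrite ger0_norm ?subr_ge0 //.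
  apply: (lt_trans _ h4); apply: (lt_le_trans _ h3).
  by rewrite ltrBlDr addrC -ltrBlDr.
have x1 : `|x| <= 1.
  have [g [dg [gx gb]]] := norming x.
  rewrite leNgt; apply/negP => hx.
  have e1 : 0 < `|x| - 1 by rewrite subr_gt0.
  have hl : \forall k \near \oo, `|g x - g (u k)| < `|x| - 1.
    by apply: cvgr_dist_lt; [exact: hw|].
  have [k hk] := filter_ex hl.
  have := gb (u k); rewrite hu1 => hg1.
  have := ler_norm (g x - g (u k)); have := ler_norm (g (u k)); rewrite gx; rewrite gx in hk; lra.
have [W [WU sW]] := ultraFilterLemma eventually_filter.
have hK : forall k, closure (T @` [set x : X | `|x| <= 1]) (T (u k)).
  move=> k; apply: subset_closure; by exists (u k) => //=; rewrite hu1.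
have [yv Ky cy] := ultra_compact_lim WU Tcomp hK.
have nyv : `|yv| = 1.
  have c1 : (fun k => `|T (u k)|) @ W --> `|yv| by apply: cvg_norm.
  have c2 := cvg_finer sW hTu.
  have := cvg_unique (@Rhausdorff R) c1 c2.
  by apply.
have Txy : T x = yv.
  have [h [dh [hy hbh]]] := norming (yv - T x).
  have dhT : dual_elt (fun z => h (T z)).
    split.
      by move=> c z w; rewrite /= Tlin (dual_lin dh).
    apply: (@lin_bounded_cont _ _ _ 1).
      by move=> c z w; rewrite Tlin (dual_lin dh).
    by move=> z; rewrite mul1r; apply: le_trans (hbh _) (Tle _).
  have c1 : (fun k => h (T (u k))) @ W --> h (T x) := cvg_finer sW (hw _ dhT).
  have c2 : (fun k => h (T (u k))) @ W --> h yv.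
    exact: (continuous_cvg _ (dh.2 yv) cy).
  have := cvg_unique (@Rhausdorff R) c1 c2.
  move=> e; apply/eqP; rewrite eq_sym -subr_eq0 -normr_eq0 -hy dualB // e subrr //.
have nx : `|x| = 1.
  apply/eqP; rewrite eq_le x1 /=; rewrite -nyv -Txy; exact: Tle.
have hnorm : (fun n => `|u n|) @ \oo --> `|x|.
  have -> : (fun n => `|u n|) = fun _ => `|x| by apply: funext => n; rewrite hu1 nx.
  exact: cvg_cst.
have hconv := hKK u x hw hnorm.
have hl : \forall k \near \oo, `|0 - `|u k - x| | < eps.
  by apply: cvgr_dist_lt; [exact: hconv|].
have [k hk] := filter_ex hl.
have := (hxs (phi k)).2.2 x nx (eq_trans (f_equal _ Txy) nyv).
rewrite -/(u k) distrC; move: hk; rewrite sub0r normrN normr_id => hk.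
by rewrite leNgt hk.
Qed.
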